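(* (i) The infinite fixed point beginning with $a$ of the morphism $a\to aca$, $b\to bc$, $c\to b$ is not $d$-automatic for any $d\ge2$. (ii) The infinite fixed point beginning with $a$ of the morphism $a\to aca$, $c\to cd$, $d\to c$ is not $d$-automatic for any $d\ge 2$.
   Context: For $d\ge 2$, a sequence is $d$-automatic if it is the letter-to-letter image of a fixed point of a morphism all of whose letter-images have length $d$. *)

(* Defs.v *)
From mathcomp Require Import all_boot.
Set Implicit Arguments. Unset Strict Implicit. Unset Printing Implicit Defensive.

Definition subst (A : Type) (sigma : A -> seq A) (w : seq A) : seq A :=
  flatten (map sigma w).

(* The infinite fixed point of sigma beginning with a (for sigma a = a :: w
   with sigma growing on a): its n-th letter is the n-th letter of
   sigma^(n+1)(a), which is a prefix of the fixed point and has length > n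
   for the morphisms considered here (sigma a = a c a). *)
Definition fixpoint (A : Type) (sigma : A -> seq A) (a : A) : nat -> A :=
  fun n => nth a (iter n.+1 (subst sigma) [:: a]) n.

(* x is d-automatic: x is the letter-to-letter image tau of a fixed point y
   of a morphism phi on a finite alphabet B all of whose letter-images have
   length d.  For a d-uniform morphism, "y = phi(y)" means exactly that the
   block y(dn) ... y(dn+d-1) equals phi(y n) for every n. *)
Definition automatic (A : Type) (d : nat) (x : nat -> A) : Prop :=
  exists (B : finType) (phi : B -> seq B) (tau : B -> A) (y : nat -> B),
    (forall b, size (phi b) = d) /\
    (forall n i, i < d -> y (d * n + i) = nth (y n) (phi (y n)) i) /\
    (forall n, x n = tau (y n)).

Inductive abc := La | Lb | Lc.
Definition sigma1 (l : abc) : seq abc :=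
  match l with La => [:: La; Lc; La] | Lb => [:: Lb; Lc] | Lc => [:: Lb] end.

Inductive acd := Ma | Mc | Md.
Definition sigma2 (l : acd) : seq acd :=
  match l with Ma => [:: Ma; Mc; Ma] | Mc => [:: Mc; Md] | Md => [:: Mc] end.

(* Main.v *)
Require Import Defs.
From mathcomp Require Import all_boot.
From HB Require Import structures.
From mathcomp Require Import zify boolp.
Set Implicit Arguments. Unset Strict Implicit. Unset Printing Implicit Defensive.

Lemma ar1 D d k q r : D * d * k + (q * d + r) = d * (D * k + q) + r.
Proof. nia. Qed.
Lemma ar2 D d n q i : D * (d * n + q) + i = D * d * n + (D * q + i).
Proof. nia. Qed.
Lemma ar3 D d q i : q < d -> i < D -> D * q + i < D * d.
Proof. nia. Qed.
Lemma ar4 D d n q r : d * D * n + (q * D + r) = D * (d * n + q) + r.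
Proof. nia. Qed.

Section Auto.
Variables (A : eqType) (x : nat -> A) (a : A) (d : nat).
Hypothesis Hd : 2 <= d.
Hypothesis Hfree : forall L, exists P, forall i, i < L -> x (P + i) != a.
Hypothesis Hgrow : forall m, 0 < m -> exists M, forall L, 0 < L ->
  (forall i, i < L -> x (L * m + i) != a) -> L <= M.

Lemma not_auto : ~ automatic d x.
Proof.
move=> [B [phi [tau [y [Hsz [Hy Hx]]]]]].
pose Af e n := forall i, i < d ^ e -> x (d ^ e * n + i) != a.
have d0 : 0 < d by lia.
have Ydet : forall e n n' i, y n = y n' -> i < d ^ e ->
    y (d ^ e * n + i) = y (d ^ e * n' + i).
  elim=> [|e IH] n n' i Hnn' Hi.
    rewrite expn0 in Hi; have -> : i = 0 by lia. by rewrite !mul1n !addn0.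
  have Hq : i %/ d < d ^ e by rewrite ltn_divLR // -expnSr.
  have Hr : i %% d < d by rewrite ltn_mod.
  have E : forall k, d ^ e.+1 * k + i = d * (d ^ e * k + i %/ d) + i %% d.
    move=> k; rewrite {1}(divn_eq i d) expnSr; exact: ar1.
  by rewrite !E !Hy // (IH n n' (i %/ d) Hnn' Hq).
have Adep : forall e m m', y m = y m' -> Af e m -> Af e m'.
  move=> e m m' H Hm i Hi; rewrite Hx -(Ydet e m m' i H Hi) -Hx; exact: Hm.
pose T e := [set b : B | `[< forall n, y n = b -> Af e n >]].
have K : forall e m, Af e m <-> y m \in T e.
  move=> e m; rewrite inE; split.
    by move=> H; apply/asboolP => n Hn; apply: (Adep e m n) => //; rewrite Hn.
  by move/asboolP => H; apply: H.
have ASplit : forall e n, Af e.+1 n <-> forall q, q < d -> Af e (d * n + q).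
  move=> e n; split.
    move=> H q Hq i Hi.
    have -> : d ^ e * (d * n + q) + i = d ^ e.+1 * n + (d ^ e * q + i)
      by rewrite expnSr ar2.
    apply: H; rewrite expnSr; exact: ar3.
  move=> H i Hi.
  have De : 0 < d ^ e by rewrite expn_gt0 d0.
  have Hq : i %/ d ^ e < d by rewrite ltn_divLR // -expnS.
  have Hr : i %% d ^ e < d ^ e by rewrite ltn_mod.
  have -> : d ^ e.+1 * n + i = d ^ e * (d * n + i %/ d ^ e) + i %% d ^ e.
    rewrite {1}(divn_eq i (d ^ e)) expnS; exact: ar4.
  exact: H.
have TS : forall e b, b \in T e.+1 <->
    (forall n, y n = b -> forall q, q < d -> y (d * n + q) \in T e).
  move=> e b; rewrite inE; split.
    move/asboolP=> H n Hn q Hq; rewrite -K; exact: ((ASplit e n).1 (H n Hn)).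
  move=> H; apply/asboolP => n Hn; apply/(ASplit e n) => q Hq.
  by apply/K; apply: H.
have Tshift : forall e1 e2, T e1 = T e2 -> T e1.+1 = T e2.+1.
  move=> e1 e2 E; apply/setP => b; apply/idP/idP => /TS H; apply/TS => n Hn q Hq.
    by rewrite -E; apply: H.
  by rewrite E; apply: H.
have TK : forall e1 e2, T e1 = T e2 -> forall k, T (e1 + k) = T (e2 + k).
  move=> e1 e2 E; elim=> [|k IH]; first by rewrite !addn0.
  by rewrite !addnS; apply: Tshift.
have [e1 [p [Hp HT]]] : exists e1 p, 0 < p /\ T e1 = T (e1 + p).
  pose f := fun i : 'I_(#|{set B}|.+1) => T i.
  have : ~~ injectiveb f.
    apply/injectiveP => inj; have := @leq_card _ _ f inj; by rewrite card_ord ltnn.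
  move=> Hn; have [i [j Hij Hf]] : exists i, exists2 j, i != j & f i = f j by apply/injectivePn.
  rewrite /f in Hf.
  case: (ltngtP i j) => Hc.
  - exists i, (j - i); split; first by rewrite subn_gt0.
    rewrite (subnKC (ltnW Hc)); exact: Hf.
  - exists j, (i - j); split; first by rewrite subn_gt0.
    rewrite (subnKC (ltnW Hc)); exact: (esym Hf).
  - by move: Hij; rewrite (val_inj Hc) eqxx.
have Tper : forall k, T (e1 + k * p) = T e1.
  elim=> [|k IH]; first by rewrite mul0n addn0.
  rewrite mulSn addnA (TK (e1 + p) e1 (esym HT)); exact: IH.
have [P HP] := Hfree (2 * d ^ e1).
have De : 0 < d ^ e1 by rewrite expn_gt0 d0.
pose m := P %/ d ^ e1 + 1.
have Am : Af e1 m.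
  move=> i Hi.
  have Hr : P %% d ^ e1 < d ^ e1 by rewrite ltn_mod.
  have EP := divn_eq P (d ^ e1).
  rewrite /m.
  set D := d ^ e1 in HP Hi Hr EP De *.
  set q := P %/ D in EP *. set r := P %% D in EP Hr *.
  have -> : D * (q + 1) + i = P + (D - r + i).
    rewrite mulnDr muln1 [D * q]mulnC EP.
    clearbody q r; move: Hr; clear; lia.
  apply: HP; clearbody D q r; move: Hr Hi EP; clear; lia.
have m0 : 0 < m by rewrite /m addn1.
have [M HM] := Hgrow m0.
have Hk : forall k, Af (e1 + k * p) m.
  by move=> k; apply/K; rewrite Tper; apply/K.
have L0 : 0 < d ^ (e1 + M.+1 * p) by rewrite expn_gt0 d0.
have LM := HM _ L0 (Hk M.+1).
have : M.+1 < d ^ (e1 + M.+1 * p).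
  apply: (leq_trans (ltn_expl _ (isT : 1 < 2))).
  apply: (@leq_trans (2 ^ (e1 + M.+1 * p))).
    apply: leq_pexp2l => //.
    apply: (leq_trans (leq_pmulr _ Hp)); exact: leq_addl.
  by rewrite leq_exp2r ?Hd // addn_gt0 muln_gt0 Hp orbT.
by move: LM; clear; lia.
Qed.
End Auto.

Lemma fbound_aux (f : nat -> nat) :
  f 0 = 1 -> 1 <= f 1 <= 2 -> (forall n, f n.+2 = f n.+1 + f n) ->
  forall n, (3 ^ n * f n <= 2 * 5 ^ n /\ 3 ^ n.+1 * f n.+1 <= 2 * 5 ^ n.+1) /\
            ((n <= f n /\ 1 <= f n) /\ (n.+1 <= f n.+1 /\ 1 <= f n.+1)).
Proof.
move=> f0 f1 fS; elim=> [|n [[IH1 IH2] [[IH3 IH4] [IH5 IH6]]]].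
  rewrite f0 !expn0 !expn1; lia.
split; split => //; last first.
- split; rewrite fS; lia.
- rewrite fS !expnS. move: IH1 IH2; rewrite !expnS.
  move: (3 ^ n) (5 ^ n) (f n) (f n.+1) => u v a b; nia.
Qed.

Lemma six_five n : (n + 5) * 5 ^ n <= 5 * 6 ^ n.
Proof.
elim: n => [|n IH]; first by [].
rewrite !expnS; move: IH; move: (5 ^ n) (6 ^ n) => u v; nia.
Qed.

Lemma final_bound (f : nat -> nat) m L n :
  (3 ^ n * f n <= 2 * 5 ^ n) -> 2 ^ n <= L * m -> L <= f n -> L <= 2 * 5 ^ (10 * m).
Proof.
move=> Hf H2 HL.
have h6 := six_five n.
have e6 : 6 ^ n = 2 ^ n * 3 ^ n by rewrite -expnMn.
have p5 : 0 < 5 ^ n by rewrite expn_gt0.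
have p3 : 0 < 3 ^ n by rewrite expn_gt0.
have A1 : 6 ^ n <= 2 * m * 5 ^ n.
  rewrite e6; move: Hf H2 HL; move: (2 ^ n) (3 ^ n) (5 ^ n) (f n) => a b c fn Hf H2 HL.
  have B1 : a * b <= L * m * b by rewrite leq_mul2r H2 orbT.
  have B2 : L * b <= fn * b by rewrite leq_mul2r HL orbT.
  have B3 : m * (L * b) <= m * (2 * c).
    by rewrite leq_mul2l (leq_trans B2) ?orbT // mulnC.
  nia.
have A2 : n <= 10 * m.
  move: A1 h6 p5; move: (6 ^ n) (5 ^ n) => a b; nia.
have A3 : 5 ^ n <= 5 ^ (10 * m) by apply: leq_pexp2l.
move: Hf HL A3 p3; move: (3 ^ n) (5 ^ n) (5 ^ (10 * m)) (f n) => a b c fn; nia.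
Qed.

Section Gen.
Variables (A : eqType) (sigma : A -> seq A) (a c : A).
Hypothesis Ha : sigma a = [:: a; c; a].
Hypothesis Hc : c != a.
Hypothesis Hna : forall l, l != a -> all (fun z => z != a) (sigma l).
Hypothesis HY : forall n, size (iter n.+2 (subst sigma) [:: c]) =
   size (iter n.+1 (subst sigma) [:: c]) + size (iter n (subst sigma) [:: c]).
Hypothesis HY1 : 1 <= size (sigma c) <= 2.

Definition XX n := iter n (subst sigma) [:: a].
Definition YY n := iter n (subst sigma) [:: c].
Definition ff n := size (YY n).

Lemma subst_cat u v : subst sigma (u ++ v) = subst sigma u ++ subst sigma v.
Proof. by rewrite /subst map_cat flatten_cat. Qed.

Lemma iter_cat n u v : iter n (subst sigma) (u ++ v) =
  iter n (subst sigma) u ++ iter n (subst sigma) v.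
Proof. elim: n => [|n IH] //=; by rewrite IH subst_cat. Qed.

Lemma XS n : XX n.+1 = XX n ++ YY n ++ XX n.
Proof.
rewrite /XX /YY iterSr /subst /= cats0 Ha.
by rewrite (iter_cat n [:: a] [:: c; a]) (iter_cat n [:: c] [:: a]).
Qed.

Lemma fprops n : (3 ^ n * ff n <= 2 * 5 ^ n /\ 3 ^ n.+1 * ff n.+1 <= 2 * 5 ^ n.+1) /\
            ((n <= ff n /\ 1 <= ff n) /\ (n.+1 <= ff n.+1 /\ 1 <= ff n.+1)).
Proof.
apply: fbound_aux => //.
by rewrite /ff /YY /= /subst /= cats0.
Qed.

Lemma sizeXS n : size (XX n.+1) = 2 * size (XX n) + ff n.
Proof. by rewrite XS !size_cat /ff; lia. Qed.

Lemma sizeX n : 2 ^ n <= size (XX n).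
Proof.
elim: n => [|n IH]; first by [].
rewrite sizeXS expnS; lia.
Qed.

Lemma nthXS n k : nth a (XX n.+1) k =
  if k < size (XX n) then nth a (XX n) k
  else if k < size (XX n) + ff n then nth a (YY n) (k - size (XX n))
  else nth a (XX n) (k - size (XX n) - ff n).
Proof.
rewrite XS !nth_cat /ff.
set s := size (XX n); set t := size (YY n).
case: (ltnP k s) => h0 //.
case: (ltnP (k - s) t) => h1; case: (ltnP k (s + t)) => h2 //; exfalso; lia.
Qed.

Lemma X0 n : nth a (XX n) 0 = a.
Proof.
elim: n => [|n IH]; first by [].
by rewrite nthXS (leq_trans _ (sizeX n)) ?expn_gt0.
Qed.

Lemma Xlast n : nth a (XX n) (size (XX n)).-1 = a.
Proof.
elim: n => [|n IH]; first by [].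
have h := sizeX n. have h' : 0 < 2 ^ n by rewrite expn_gt0.
rewrite nthXS sizeXS.
have -> : (2 * size (XX n) + ff n).-1 < size (XX n) = false by apply/negbTE; rewrite -leqNgt; lia.
have -> : (2 * size (XX n) + ff n).-1 < size (XX n) + ff n = false by apply/negbTE; rewrite -leqNgt; lia.
have -> : (2 * size (XX n) + ff n).-1 - size (XX n) - ff n = (size (XX n)).-1 by lia.
exact: IH.
Qed.

Lemma Xpref n j k : k < size (XX n) -> nth a (XX (n + j)) k = nth a (XX n) k.
Proof.
move=> hk; elim: j => [|j IH]; first by rewrite addn0.
rewrite addnS nthXS.
have -> : k < size (XX (n + j)) = true.
  apply: (leq_trans hk); elim: j {IH} => [|j IHj]; first by rewrite addn0.
  by apply: (leq_trans IHj); rewrite addnS sizeXS; lia.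
exact: IH.
Qed.

Lemma fixX n k : k < size (XX n) -> fixpoint sigma a k = nth a (XX n) k.
Proof.
move=> hk.
have hk' : k < size (XX k.+1) by apply: (leq_trans _ (sizeX k.+1)); exact: ltnW (ltn_expl _ (isT : 1 < 2)).
rewrite /fixpoint -/(XX k.+1).
rewrite -(Xpref (maxn n k.+1 - k.+1) hk') -(Xpref (maxn n k.+1 - n) hk).
by rewrite !subnKC ?leq_maxl ?leq_maxr.
Qed.

Lemma substNa w : all (fun z => z != a) w -> all (fun z => z != a) (subst sigma w).
Proof.
elim: w => [|z w IH] //= /andP [hz hw].
by rewrite /subst /= all_cat Hna //; apply: IH.
Qed.

Lemma YNa n : all (fun z => z != a) (YY n).
Proof.
elim: n => [|n IH]; first by rewrite /= Hc.
rewrite /YY iterS; exact: substNa.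
Qed.

Lemma freeX n P L : 0 < L -> P + L <= size (XX n) ->
  (forall i, i < L -> nth a (XX n) (P + i) != a) ->
  exists k, 2 ^ k <= P /\ L <= ff k.
Proof.
elim: n P => [|n IH] P L0 hPL H.
  have := H 0 L0; have -> : P + 0 = 0 by simpl in hPL; lia. by rewrite eqxx.
move: hPL; rewrite sizeXS => hPL.
have hs := sizeX n.
set s := size (XX n) in hPL hs IH H *.
case: (leqP (P + L) s) => h1.
  apply: (IH P L0 h1) => i hi.
  by have := H i hi; rewrite nthXS (_ : P + i < s) //; lia.
case: (ltnP P s) => h2.
  have := H (s.-1 - P); rewrite nthXS.
  have -> : P + (s.-1 - P) = s.-1 by lia.
  rewrite (_ : s.-1 < s); last by lia.
  rewrite Xlast eqxx => hh; have : s.-1 - P < L by lia. by move/hh.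
case: (leqP (P + L) (s + ff n)) => h3.
  exists n; split; [exact: leq_trans hs h2 | lia].
case: (ltnP P (s + ff n)) => h4.
  have := H (s + ff n - P); rewrite nthXS.
  have -> : P + (s + ff n - P) = s + ff n by lia.
  rewrite (_ : s + ff n < s = false); last by apply/negbTE; rewrite -leqNgt; lia.
  rewrite (_ : s + ff n < s + ff n = false); last by rewrite ltnn.
  rewrite (_ : s + ff n - s - ff n = 0); last by lia.
  rewrite X0 eqxx => hh; have : s + ff n - P < L by lia. by move/hh.
have [k [hk1 hk2]] : exists k, 2 ^ k <= P - s - ff n /\ L <= ff k.
  apply: (IH (P - s - ff n) L0); first by lia.
  move=> i hi; have := H i hi; rewrite nthXS.
  rewrite (_ : P + i < s = false); last by apply/negbTE; rewrite -leqNgt; lia.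
  rewrite (_ : P + i < s + ff n = false); last by apply/negbTE; rewrite -leqNgt; lia.
  by rewrite (_ : P + i - s - ff n = P - s - ff n + i) //; lia.
exists k; split => //; lia.
Qed.

Lemma gen_not_auto d : 2 <= d -> ~ automatic d (fixpoint sigma a).
Proof.
move=> Hd; apply: not_auto => //.
- move=> L; exists (size (XX L)) => i hi.
  have hf := (fprops L).2.1.1.
  rewrite (fixX (n := L.+1)); last by rewrite sizeXS; lia.
  rewrite nthXS ltnNge leq_addr /= (_ : size (XX L) + i < size (XX L) + ff L); last by lia.
  rewrite addKn; move/(all_nthP a): (YNa L) => hY; apply: hY; rewrite -/(ff L); lia.
- move=> m m0; exists (2 * 5 ^ (10 * m)) => L L0 H.
  have [n [h1 h2]] : exists n, 2 ^ n <= L * m /\ L <= ff n.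
    apply: (freeX (n := L * m + L) L0).
      by apply: (leq_trans _ (sizeX _)); apply: ltnW; apply: ltn_expl.
    move=> i hi; rewrite -fixX; first exact: H.
    apply: (leq_trans _ (sizeX _)); apply: (leq_trans _ (ltn_expl _ (isT : 1 < 2))); lia.
  exact: (final_bound (fprops n).1.1 h1 h2).
Qed.
End Gen.

Definition abc_eq (u v : abc) := match u, v with La,La|Lb,Lb|Lc,Lc => true | _,_ => false end.
Lemma abc_eqP : Equality.axiom abc_eq. Proof. by case; case; constructor. Qed.
HB.instance Definition _ := hasDecEq.Build abc abc_eqP.
Definition acd_eq (u v : acd) := match u, v with Ma,Ma|Mc,Mc|Md,Md => true | _,_ => false end.
Lemma acd_eqP : Equality.axiom acd_eq. Proof. by case; case; constructor. Qed.
HB.instance Definition _ := hasDecEq.Build acd acd_eqP.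

Theorem corollary5p4 :
  (forall d : nat, 2 <= d -> ~ automatic d (fixpoint sigma1 La)) /\
  (forall d : nat, 2 <= d -> ~ automatic d (fixpoint sigma2 Ma)).
Proof.
split => d Hd.
- apply: (@gen_not_auto abc sigma1 La Lc) => //; first by case.
  move=> n.
  have e1 : forall k, iter k.+1 (subst sigma1) [:: Lc] = iter k (subst sigma1) [:: Lb].
    by move=> k; rewrite iterSr.
  have e2 : iter n.+1 (subst sigma1) [:: Lb] =
      iter n (subst sigma1) [:: Lb] ++ iter n (subst sigma1) [:: Lc].
    by rewrite iterSr -iter_cat.
  by rewrite e1 e2 size_cat e1.
- apply: (@gen_not_auto acd sigma2 Ma Mc) => //; first by case.
  move=> n.
  have e1 : forall k, iter k.+1 (subst sigma2) [:: Md] = iter k (subst sigma2) [:: Mc].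
    by move=> k; rewrite iterSr.
  have e2 : forall k, iter k.+1 (subst sigma2) [:: Mc] =
      iter k (subst sigma2) [:: Mc] ++ iter k (subst sigma2) [:: Md].
    by move=> k; rewrite iterSr -iter_cat.
  by rewrite e2 size_cat e1.
Qed.
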